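(* Let $\varepsilon>0$, $p\in(0,1/2)$, and $R=1-H(p)-\varepsilon$. Let $\mathcal{C}\subseteq\mathbb{F}_2^n$ be a random linear code of rate $R$. Then with probability $1-\exp(-\Omega_\varepsilon(n))$, $\mathcal{C}$ satisfies $S_{\mathcal{C}}\le 2$.
   Context: $H(p)=-p\log_2 p-(1-p)\log_2(1-p)$. $L_{\mathcal{C}}(x)=|\{c\in\mathcal{C}:\Delta(x,c)\le pn\}|$ with $\Delta$ Hamming distance; $A_{\mathcal{C}}(x)=2^{\frac{\varepsilon n L_{\mathcal{C}}(x)}{1+\varepsilon}}$ and $S_{\mathcal{C}}=\mathbb{E}_{x\sim\mathbb{F}_2^n}[A_{\mathcal{C}}(x)]$ ($x$ uniform). A random linear code of rate $R$ is $\mathrm{span}(b_1,\dots,b_k)$ with $k=Rn$ (an integer) and $b_i$ independent uniform in $\mathbb{F}_2^n$. *)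

(* Defs.v *)
From HB Require Import structures.
From mathcomp Require Import all_boot all_order all_algebra.
From Stdlib Require Import Reals.
Set Implicit Arguments. Unset Strict Implicit. Unset Printing Implicit Defensive.

Definition log2 (x : R) : R := (ln x / ln 2)%R.
Definition Hbin (p : R) : R := (- p * log2 p - (1 - p) * log2 (1 - p))%R.

Definition hdist (n : nat) (x y : 'rV['F_2]_n) : nat :=
  #|[set i : 'I_n | x ord0 i != y ord0 i]|.

Definition span_code (k n : nat) (B : 'M['F_2]_(k, n)) : {set 'rV['F_2]_n} :=
  [set mulmx a B | a : 'rV['F_2]_k].

Definition Lcount (n : nat) (p : R) (C : {set 'rV['F_2]_n}) (x : 'rV['F_2]_n) : nat :=
  #|[set c in C | Rle_dec (INR (hdist x c)) (p * INR n)%R]|.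

Definition Aval (n : nat) (p eps : R) (C : {set 'rV['F_2]_n}) (x : 'rV['F_2]_n) : R :=
  Rpower 2 (eps * INR n * INR (Lcount p C x) / (1 + eps))%R.

Definition Sval (n : nat) (p eps : R) (C : {set 'rV['F_2]_n}) : R :=
  ((\big[Rplus/0%R]_(x : 'rV['F_2]_n) Aval p eps C x) / INR #|{: 'rV['F_2]_n}|)%R.

(* Probability, over b_1..b_k independent uniform in F_2^n (i.e. B uniform in
   'M_(k,n)), that the random linear code span(b_1..b_k) has S_C > 2. *)
Definition prob_bad (n k : nat) (p eps : R) : R :=
  ((\big[Rplus/0%R]_(B : 'M['F_2]_(k, n))
      (if Rle_dec (Sval p eps (span_code B)) 2 then 0 else 1)%R)
   / INR #|{: 'M['F_2]_(k, n)}|)%R.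

(* Main.v *)
Require Import Defs.
From HB Require Import structures.
From mathcomp Require Import all_boot all_order all_algebra.
From Stdlib Require Import Reals Lra.
Set Implicit Arguments. Unset Strict Implicit. Unset Printing Implicit Defensive.
Import GRing.Theory.
Section Comb.
Local Open Scope ring_scope.

Lemma F2_cases (x : 'F_2) : x = 0 \/ x = 1.
Proof. case: x => [[|[|m]] Hm]; [left|right|]; try by apply/val_inj.
by move: Hm; rewrite /= (@pdiv_id 2). Qed.
Lemma F2_addxx (x : 'F_2) : (x + x = 0).
Proof. by case: (F2_cases x) => ->; [rewrite addr0 | apply/val_inj]. Qed.
Lemma rv_addxx n (v : 'rV['F_2]_n) : (v + v = 0).
Proof. by apply/rowP => i; rewrite !mxE F2_addxx. Qed.

Lemma hdist_addr n (x y b : 'rV['F_2]_n) : hdist (x + b) (y + b) = hdist x y.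
Proof.
rewrite /hdist; apply: eq_card => i; rewrite !inE !mxE.
by rewrite (inj_eq (@addIr _ _)).
Qed.

Lemma span_col n k (b : 'rV['F_2]_n) (B : 'M['F_2]_(k, n)) c :
  c \in span_code (col_mx b B : 'M_(1 + k, n)) ->
  c \in span_code B \/ (c + b) \in span_code B.
Proof.
case/imsetP => a _ ->.
rewrite -[a](hsubmxK (a : 'M_(1, 1 + k))) mul_row_col.
rewrite [lsubmx _]mx11_scalar mul_scalar_mx.
case: (F2_cases (lsubmx (a : 'M_(1, 1 + k)) 0 0)) => ->.
  by left; rewrite scale0r add0r; apply/imsetP; exists (rsubmx (a : 'M_(1, 1 + k))).
right; rewrite scale1r -addrA [(_ *m B + b)]addrC addrA rv_addxx add0r.
by apply/imsetP; exists (rsubmx (a : 'M_(1, 1 + k))).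
Qed.

Lemma Lcount_col n k p (b x : 'rV['F_2]_n) (B : 'M['F_2]_(k, n)) :
  leq (Lcount p (span_code (col_mx b B : 'M_(1 + k, n))) x)
   (addn (Lcount p (span_code B) x) (Lcount p (span_code B) (x + b))).
Proof.
rewrite /Lcount.
set S1 := [set c in span_code B | _].
set S2 := [set c in span_code B | _].
apply: leq_trans (_ : leq #|S1 :|: [set (c + b) | c in S2]| _).
  apply: subset_leq_card; apply/subsetP => c; rewrite inE => /andP [Hc Hd].
  rewrite inE; case: (span_col Hc) => Hc'.
    by apply/orP; left; rewrite inE Hc'.
  apply/orP; right; apply/imsetP; exists (c + b).
    by rewrite inE Hc' hdist_addr.
  by rewrite -addrA rv_addxx addr0.
by apply: leq_trans (leq_card_setU _ _) _; rewrite leq_add2l leq_imset_card.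
Qed.
End Comb.
Local Open Scope R_scope.

Lemma RplusA : associative Rplus. Proof. by move=> *; rewrite Rplus_assoc. Qed.
Lemma RmultA : associative Rmult. Proof. by move=> *; rewrite Rmult_assoc. Qed.
HB.instance Definition _ := Monoid.isComLaw.Build R 0%R Rplus RplusA Rplus_comm Rplus_0_l.
HB.instance Definition _ := Monoid.isComLaw.Build R 1%R Rmult RmultA Rmult_comm Rmult_1_l.
HB.instance Definition _ := Monoid.isMulLaw.Build R 0%R Rmult Rmult_0_l Rmult_0_r.
HB.instance Definition _ := Monoid.isAddLaw.Build R Rmult Rplus Rmult_plus_distr_r Rmult_plus_distr_l.

Lemma sum_le (I : finType) (F G : I -> R) :
  (forall i, F i <= G i) -> \big[Rplus/0]_i F i <= \big[Rplus/0]_i G i.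
Proof. by move=> H; apply: (big_ind2 Rle) => //; [lra | move=> *; lra]. Qed.

Lemma sum_ge0 (I : finType) (F : I -> R) :
  (forall i, 0 <= F i) -> 0 <= \big[Rplus/0]_i F i.
Proof. by move=> H; apply: (big_ind (Rle 0)) => //; [lra | move=> *; lra]. Qed.

Lemma iter_plus k c : iter k (Rplus c) 0 = INR k * c.
Proof. elim: k => [|k IH]; first by rewrite /=; lra. rewrite iterS IH S_INR; lra. Qed.

Lemma sum_const (I : finType) (c : R) :
  \big[Rplus/0]_(i : I) c = INR #|I| * c.
Proof. by rewrite big_const iter_plus. Qed.

Lemma INR_expn a b : INR (expn a b) = INR a ^ b.
Proof. elim: b => [|b IH] //=. by rewrite expnS mult_INR IH. Qed.

Lemma card_M k n : INR #|{: 'M['F_2]_(k, n)}| = 2 ^ (k * n).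
Proof. by rewrite card_mx card_Fp // INR_expn. Qed.

Definition Ssum n p eps (C : {set 'rV['F_2]_n}) : R :=
  \big[Rplus/0]_(x : 'rV['F_2]_n) Aval p eps C x.

Lemma Sval_E n p eps (C : {set 'rV['F_2]_n}) : Sval p eps C = Ssum p eps C / 2 ^ n.
Proof. by rewrite /Sval /Ssum card_M mul1n. Qed.

Lemma Rpower2_ge1 x : 0 <= x -> 1 <= Rpower 2 x.
Proof. move=> Hx; rewrite -(Rpower_O 2); [apply: Rle_Rpower|]; lra. Qed.

Lemma Aval_ge1 n p eps (C : {set 'rV['F_2]_n}) x : 0 < eps -> 1 <= @Aval n p eps C x.
Proof.
move=> He; apply: Rpower2_ge1.
have := pos_INR n; have := pos_INR (Lcount p C x) => *.
apply: Rmult_le_pos; last (apply: Rlt_le; apply: Rinv_0_lt_compat; lra).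
apply: Rmult_le_pos => //; apply: Rmult_le_pos; lra.
Qed.

Lemma Ssum_ge n p eps (C : {set 'rV['F_2]_n}) : 0 < eps -> 2 ^ n <= @Ssum n p eps C.
Proof.
move=> He; apply: Rle_trans (_ : \big[Rplus/0]_(x : 'rV['F_2]_n) 1 <= _).
  by rewrite sum_const card_M mul1n; lra.
by apply: sum_le => x; apply: Aval_ge1.
Qed.

Lemma Aval_col n k p eps (b x : 'rV['F_2]_n) (B : 'M['F_2]_(k, n)) : 0 < eps ->
  Aval p eps (span_code (col_mx b B : 'M_(1 + k, n))) x <=
  Aval p eps (span_code B) x * Aval p eps (span_code B) (GRing.add x b).
Proof.
move=> He; rewrite /Aval -Rpower_plus; apply: Rle_Rpower; first lra.
have H := Lcount_col p b x B; move/leP: H => /le_INR; rewrite plus_INR => H.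
set L1 := INR (Lcount _ _ _) in H *.
set L2 := INR (Lcount _ _ x) in H *.
set L3 := INR (Lcount _ _ (GRing.add x b)) in H *.
have := pos_INR n => Hn.
have Hi : 0 < / (1 + eps) by apply: Rinv_0_lt_compat; lra.
rewrite /Rdiv -Rmult_plus_distr_r; apply: Rmult_le_compat_r; first lra.
rewrite -Rmult_plus_distr_l; apply: Rmult_le_compat_l => //.
apply: Rmult_le_pos; lra.
Qed.

Lemma Ssum_step n k p eps (B : 'M['F_2]_(k, n)) : 0 < eps ->
  \big[Rplus/0]_(b : 'rV['F_2]_n) Ssum p eps (span_code (col_mx b B : 'M_(1 + k, n)))
  <= Ssum p eps (span_code B) * Ssum p eps (span_code B).
Proof.
move=> He; rewrite /Ssum.
apply: Rle_trans (_ : \big[Rplus/0]_(b : 'rV['F_2]_n) \big[Rplus/0]_(x : 'rV['F_2]_n)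
   (Aval p eps (span_code B) x * Aval p eps (span_code B) (GRing.add x b)) <= _).
  by apply: sum_le => b; apply: sum_le => x; apply: Aval_col.
rewrite exchange_big /= big_distrl /=; apply: Req_le; apply: eq_bigr => x _.
rewrite big_distrr /=.
by rewrite [RHS](reindex_inj (@GRing.addrI _ x)).
Qed.

Lemma split_sum (n k : nat) (F : 'M['F_2]_(k.+1, n) -> R) :
  \big[Rplus/0%R]_(M : 'M['F_2]_(k.+1, n)) F M =
  \big[Rplus/0%R]_(B : 'M['F_2]_(k, n)) \big[Rplus/0%R]_(b : 'rV['F_2]_n) F (col_mx b B).
Proof.
rewrite (exchange_big) pair_big /=.
rewrite (reindex (fun bB : 'rV['F_2]_n * 'M['F_2]_(k,n) => (col_mx bB.1 bB.2 : 'M_(k.+1,n)))) //.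
exists (fun M : 'M['F_2]_(1 + k, n) => (usubmx M, dsubmx M)) => [[b B] _|M _] /=.
  by rewrite col_mxKu col_mxKd.
by rewrite vsubmxK.
Qed.


Lemma sum_M0 n (F : 'M['F_2]_(0, n) -> R) :
  \big[Rplus/0%R]_(B : 'M['F_2]_(0, n)) F B = F (GRing.zero).
Proof. by rewrite (big_pred1 GRing.zero) // => B; rewrite /= flatmx0 eqxx. Qed.

Lemma sum_divr (I : finType) (F : I -> R) c :
  \big[Rplus/0]_i (F i / c) = (\big[Rplus/0]_i F i) / c.
Proof. by rewrite /Rdiv big_distrl. Qed.

Section Proc.
Variables (n : nat) (p eps th : R).
Hypothesis He : 0 < eps.
Hypothesis Hth : 0 < th.

Definition uB k (B : 'M['F_2]_(k, n)) := Sval p eps (span_code B) - 1.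
Definition ind (u : R) : R := if Rle_dec u th then 1 else 0.

Fixpoint Gd (k : nat) : 'M['F_2]_(k, n) -> R :=
 match k with
 | 0 => fun B => ind (uB B)
 | k'.+1 => fun M => Gd (dsubmx (M : 'M_(1 + k', n))) * ind (uB M)
 end.

Lemma uB_ge0 k (B : 'M['F_2]_(k, n)) : 0 <= uB B.
Proof.
rewrite /uB Sval_E; have := Ssum_ge p (span_code B) He.
have := pow_lt 2 n ltac:(lra) => H1 H2.
apply: Rle_trans (_ : 1 - 1 <= _); first lra.
apply: Rplus_le_compat_r; rewrite -(Rdiv_diag (2 ^ n)); last lra.
by apply: Rmult_le_compat_r => //; apply: Rlt_le; apply: Rinv_0_lt_compat.
Qed.

Lemma G_vals k (B : 'M['F_2]_(k, n)) : Gd B = 0 \/ (Gd B = 1 /\ uB B <= th).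
Proof.
elim: k B => [|k IH] B /=; rewrite /ind.
  by case: Rle_dec => H; [right|left].
case: (IH (dsubmx (B : 'M_(1 + k, n)))) => [->|[-> _]]; first by left; lra.
by case: Rle_dec => H /=; [right; split => //; lra | left; lra].
Qed.

Lemma sum_u_step k (B : 'M['F_2]_(k, n)) :
  \big[Rplus/0]_(b : 'rV['F_2]_n) uB (col_mx b B : 'M_(k.+1, n))
  <= 2 ^ n * (2 * uB B + uB B * uB B).
Proof.
rewrite /uB /Rminus big_split /= sum_const card_M mul1n.
have HN := pow_lt 2 n ltac:(lra).
have H1 := Ssum_step p B He.
rewrite (eq_bigr (fun b => Ssum p eps (span_code (col_mx b B : 'M_(1 + k, n))) / 2 ^ n));
  last by move=> b _; rewrite Sval_E.
rewrite sum_divr Sval_E.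
set T := Ssum p eps (span_code B) in H1 *.
set U := \big[Rplus/0]_b _ in H1 *.
have H2 : U / 2 ^ n <= T * T / 2 ^ n.
  by apply: Rmult_le_compat_r => //; apply: Rlt_le; apply: Rinv_0_lt_compat.
have E : T * T / 2 ^ n = 2 ^ n * (T / 2 ^ n) * (T / 2 ^ n) by field; lra.
rewrite E in H2.
set S := T / 2 ^ n in H2 *. nra.
Qed.

Lemma Gu_le k (B : 'M['F_2]_(k, n)) :
  Gd B * (2 * uB B + uB B * uB B) <= (2 + th) * (Gd B * uB B).
Proof.
have := uB_ge0 B; case: (G_vals B) => [->|[-> H]] H0; nra.
Qed.

Definition u0 := uB (GRing.zero : 'M['F_2]_(0, n)).

Lemma W_bound k :
  \big[Rplus/0]_(B : 'M['F_2]_(k, n)) (Gd B * uB B) <= (2 + th) ^ k * u0 * (2 ^ n) ^ k.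
Proof.
elim: k => [|k IH].
  rewrite sum_M0 /u0; have := uB_ge0 (GRing.zero : 'M['F_2]_(0, n)).
  case: (G_vals (GRing.zero : 'M['F_2]_(0, n))) => [->|[-> _]] /= H; nra.
rewrite split_sum.
apply: Rle_trans (_ : \big[Rplus/0]_(B : 'M['F_2]_(k, n))
    (Gd B * (2 ^ n * (2 * uB B + uB B * uB B))) <= _).
  apply: sum_le => B; rewrite /=.
  apply: Rle_trans (_ : Gd B * \big[Rplus/0]_(b : 'rV['F_2]_n) uB (col_mx b B : 'M_(k.+1, n)) <= _).
    rewrite big_distrr /=; apply: sum_le => b; rewrite col_mxKd.
    have := uB_ge0 (col_mx b B : 'M_(k.+1, n)).
    rewrite /ind; case: Rle_dec => _ /=; case: (G_vals B) => [->|[-> _]]; nra.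
  have := sum_u_step B; case: (G_vals B) => [->|[-> _]]; nra.
apply: Rle_trans (_ : \big[Rplus/0]_(B : 'M['F_2]_(k, n))
    (2 ^ n * (2 + th) * (Gd B * uB B)) <= _).
  apply: sum_le => B; have := Gu_le B; have := pow_lt 2 n ltac:(lra); nra.
rewrite -big_distrr /=.
apply: Rle_trans (_ : 2 ^ n * (2 + th) * ((2 + th) ^ k * u0 * (2 ^ n) ^ k) <= _).
  apply: Rmult_le_compat_l => //; have := pow_lt 2 n ltac:(lra); nra.
by apply: Req_le; ring.
Qed.

Lemma Bad_bound k :
  \big[Rplus/0]_(B : 'M['F_2]_(k, n)) (1 - Gd B)
  <= (INR k + 1) * (2 + th) ^ k * (u0 / th) * (2 ^ n) ^ k.
Proof.
have Hu0 : 0 <= u0 by apply: uB_ge0.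
have Hi : 0 < / th by apply: Rinv_0_lt_compat.
elim: k => [|k IH].
  rewrite sum_M0 /= /ind -/u0; case: Rle_dec => H /=.
    apply: Rle_trans (_ : 0 <= _); [lra|]; rewrite /Rdiv; nra.
  have : 1 <= u0 / th.
    apply: (Rmult_le_reg_r th) => //; rewrite /Rdiv Rmult_assoc Rinv_l; lra.
  lra.
rewrite split_sum.
apply: Rle_trans (_ : \big[Rplus/0]_(B : 'M['F_2]_(k, n))
    (2 ^ n * (1 - Gd B) + (2 ^ n * (2 + th) / th) * (Gd B * uB B)) <= _).
  apply: sum_le => B; rewrite /=.
  apply: Rle_trans (_ : \big[Rplus/0]_(b : 'rV['F_2]_n)
      ((1 - Gd B) + (Gd B / th) * uB (col_mx b B : 'M_(k.+1, n))) <= _).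
    apply: sum_le => b; rewrite col_mxKd.
    have := uB_ge0 (col_mx b B : 'M_(k.+1, n)).
    rewrite /ind; case: Rle_dec => H /=; case: (G_vals B) => [->|[-> _]] => H0;
      rewrite /Rdiv; try nra.
    have : th * / th = 1 by apply: Rinv_r; lra.
    nra.
  rewrite big_split /= sum_const card_M mul1n -big_distrr /=.
  have := sum_u_step B; have := Gu_le B; have := uB_ge0 B.
  case: (G_vals B) => [->|[-> _]] => H0 H1 H2; rewrite /Rdiv; try nra.
  rewrite !Rmult_1_l; apply: Rplus_le_compat_l.
  apply: Rle_trans (_ : / th * (2 ^ n * (2 * uB B + uB B * uB B)) <= _).
    apply: Rmult_le_compat_l; [lra|exact: H2].
  have HX : 2 * uB B + uB B * uB B <= (2 + th) * uB B by lra.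
  have := pow_lt 2 n ltac:(lra) => HN.
  apply: Rle_trans (_ : / th * (2 ^ n * ((2 + th) * uB B)) <= _).
    apply: Rmult_le_compat_l; [lra| apply: Rmult_le_compat_l; lra].
  by right; ring.
rewrite big_split -!big_distrr S_INR /=.
have HW := W_bound k.
have Hs : 0 <= \big[Rplus/0]_(B : 'M['F_2]_(k, n)) (1 - Gd B).
  by apply: sum_ge0 => B; case: (G_vals B) => [->|[-> _]]; lra.
have HN := pow_lt 2 n ltac:(lra).
have HP := pow_lt (2 + th) k ltac:(lra).
have HN' := pow_lt (2 ^ n) k HN.
set X := \big[Rplus/0]_(B : 'M['F_2]_(k, n)) (1 - Gd B) in IH Hs *.
set Y := \big[Rplus/0]_(B : 'M['F_2]_(k, n)) (Gd B * uB B) in HW *.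

apply: Rle_trans (_ : 2 ^ n * ((INR k + 1) * (2 + th) ^ k * (u0 / th) * (2 ^ n) ^ k)
   + 2 ^ n * (2 + th) / th * ((2 + th) ^ k * u0 * (2 ^ n) ^ k) <= _).
  apply: Rplus_le_compat; [apply: Rmult_le_compat_l; [lra|exact: IH]|].
  apply: Rmult_le_compat_l; [|exact: HW].
  rewrite /Rdiv; apply: Rmult_le_pos; [apply: Rmult_le_pos|]; lra.
have Hk := pos_INR k.
have Hq : 0 <= u0 / th by rewrite /Rdiv; nra.
have E1 : 2 ^ n * (2 + th) / th * ((2 + th) ^ k * u0 * (2 ^ n) ^ k) =
   1 * ((2 + th) * (2 + th) ^ k) * (u0 / th) * (2 ^ n * (2 ^ n) ^ k) by field; lra.
rewrite E1.
set P := (2 + th) ^ k in HP E1 *. set Q := (2 ^ n) ^ k in HN' E1 *.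
set z := u0 / th in Hq E1 *.
have HA : 0 <= (INR k + 1) * P * z * Q * 2 ^ n.
  apply: Rmult_le_pos; [apply: Rmult_le_pos; [apply: Rmult_le_pos; [apply: Rmult_le_pos|]|]|]; lra.
have E2 : (INR k + 1) * ((2 + th) * P) * z * (2 ^ n * Q) = (2 + th) * ((INR k + 1) * P * z * Q * 2 ^ n) by ring.
have E3 : 2 ^ n * ((INR k + 1) * P * z * Q) = (INR k + 1) * P * z * Q * 2 ^ n by ring.
rewrite E3.
have E4 : (INR k + 1 + 1) * ((2 + th) * P) * z * (2 ^ n * Q) = (INR k + 1) * ((2 + th) * P) * z * (2 ^ n * Q) + 1 * ((2 + th) * P) * z * (2 ^ n * Q) by ring.
rewrite E4 E2. nra.
Qed.

End Proc.

Lemma iter_mult k c : iter k (Rmult c) 1 = c ^ k.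
Proof. by elim: k => [|k IH] //; rewrite iterS IH. Qed.

Definition wt n p (x : 'rV['F_2]_n) : R :=
  \big[Rmult/1]_(i : 'I_n) (if x ord0 i != GRing.zero then p else 1 - p).

Lemma sum_F2 (f : 'F_2 -> R) :
  \big[Rplus/0]_(b : 'F_2) f b = f GRing.zero + f (GRing.one _).
Proof.
rewrite (bigD1 GRing.zero) //=; congr Rplus.
rewrite (big_pred1 (GRing.one _)) // => b /=.
case: (F2_cases b) => ->; first by rewrite eqxx.
by rewrite eqxx.
Qed.

Section RowF.
Local Open Scope ring_scope.
Definition rowf n (phi : {ffun 'I_n -> 'F_2}) : 'rV['F_2]_n := \row_i phi i.
Lemma rowfE n (phi : {ffun 'I_n -> 'F_2}) i : rowf phi ord0 i = phi i.
Proof. by rewrite mxE. Qed.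
End RowF.

Lemma sum_wt n p : \big[Rplus/0]_(x : 'rV['F_2]_n) wt p x = 1.
Proof.
rewrite /wt (reindex (@rowf n)) /=; last first.
  exists (fun x : 'rV['F_2]_n => [ffun i => x ord0 i]) => [phi _|x _].
    by apply/ffunP => i; rewrite ffunE rowfE.
  by apply/rowP => i; rewrite rowfE ffunE.
under eq_bigr => phi _ do under eq_bigr => i _ do rewrite rowfE.
rewrite -(bigA_distr_bigA (fun (i : 'I_n) (b : 'F_2) => if b != GRing.zero then p else 1 - p)).
rewrite big1 // => i _; rewrite sum_F2 eqxx /=; lra.
Qed.

Lemma wt_eq n p (x : 'rV['F_2]_n) :
  wt p x = p ^ (hdist x GRing.zero) * (1 - p) ^ (n - hdist x GRing.zero).
Proof.
rewrite /wt (bigID (fun i => x ord0 i != GRing.zero)) /=.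
rewrite [X in X * _](eq_bigr (fun=> p)); last by move=> i ->.
rewrite [X in _ * X](eq_bigr (fun=> 1 - p)); last by move=> i /negbTE ->.
rewrite !big_const !iter_mult.
have Hd : #|(fun i : 'I_n => x ord0 i != GRing.zero)| = hdist x GRing.zero.
  by rewrite /hdist; apply: eq_card => i; rewrite inE mxE.
have := cardC (fun i : 'I_n => x ord0 i != GRing.zero); rewrite card_ord => Hn.
have Hc : #|(fun i : 'I_n => ~~ (x ord0 i != GRing.zero))| = subn n (hdist x GRing.zero).
  by rewrite -[X in subn X _]Hn Hd addKn; apply: eq_card.
by rewrite Hc Hd.
Qed.

Lemma exp_le x y : x <= y -> exp x <= exp y.
Proof. by case/Rle_lt_or_eq_dec => [/exp_increasing/Rlt_le|->]; [|apply: Rle_refl]. Qed.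

Lemma HL2 p : Hbin p * ln 2 = - p * ln p - (1 - p) * ln (1 - p).
Proof.
rewrite /Hbin /log2; have := ln_lt_2; move=> H; field; lra.
Qed.

Lemma hdist_le n (x y : 'rV['F_2]_n) : leq (hdist x y) n.
Proof. by rewrite /hdist -[X in leq _ X]card_ord max_card. Qed.

Lemma wt_lb n p (x : 'rV['F_2]_n) : 0 < p -> p < / 2 ->
  INR (hdist x GRing.zero) <= p * INR n ->
  exp (- (INR n * (Hbin p * ln 2))) <= wt p x.
Proof.
move=> Hp Hp2 Hw; rewrite wt_eq.
have Hle := hdist_le x GRing.zero.
set w := hdist x GRing.zero in Hw Hle *.
rewrite -!Rpower_pow; try lra.
rewrite /Rpower -exp_plus minus_INR; last by apply/leP.
apply: exp_le; rewrite HL2.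
have Hlt : ln p < ln (1 - p) by apply: ln_increasing; lra.
have := pos_INR w; have := pos_INR n; nra.
Qed.

Lemma vol_bound n p : 0 < p -> p < / 2 ->
  \big[Rplus/0]_(x : 'rV['F_2]_n)
     (if Rle_dec (INR (hdist x GRing.zero)) (p * INR n) then 1 else 0)
  <= exp (INR n * (Hbin p * ln 2)).
Proof.
move=> Hp Hp2.
set e := exp (- (INR n * (Hbin p * ln 2))).
have He : 0 < e by apply: exp_pos.
have He' : exp (INR n * (Hbin p * ln 2)) = / e.
  by rewrite /e exp_Ropp Rinv_inv.
rewrite He'; apply: (Rmult_le_reg_r e) => //; rewrite Rinv_l; last lra.
rewrite big_distrl /= -[X in _ <= X](sum_wt n p); apply: sum_le => x.
case: Rle_dec => H /=; rewrite ?Rmult_1_l ?Rmult_0_l; first exact: wt_lb Hp Hp2 H.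
rewrite /wt; apply: (big_ind (Rle 0)) => //; first lra.
  by move=> *; apply: Rmult_le_pos.
by move=> i _; case: ifP => _; lra.
Qed.

Section Span0.
Local Open Scope ring_scope.
Lemma span0 n : span_code (0 : 'M['F_2]_(0, n)) = [set 0].
Proof.
apply/setP => c; rewrite inE; apply/imsetP/eqP => [[a _ ->]|->].
  by rewrite mulmx0.
by exists 0 => //; rewrite mulmx0.
Qed.
End Span0.

Lemma Lcount0 n p (x : 'rV['F_2]_n) :
  Lcount p (span_code (GRing.zero : 'M['F_2]_(0, n))) x =
  if Rle_dec (INR (hdist x GRing.zero)) (p * INR n) then 1%nat else 0%nat.
Proof.
rewrite /Lcount span0; case: Rle_dec => H /=.
  rewrite -[X in _ = X](cards1 (GRing.zero : 'rV['F_2]_n)); apply: eq_card => c.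
  rewrite !inE; case: (eqVneq c GRing.zero) => [->|] //=.
  by case: Rle_dec.
rewrite -[X in _ = X](cards0 'rV['F_2]_n); apply: eq_card => c.
rewrite !inE; case: (eqVneq c GRing.zero) => [->|] //=.
by case: Rle_dec.
Qed.
Lemma u0_bound n p eps : 0 < eps -> 0 < p -> p < / 2 ->
  u0 n p eps <= Rpower 2 (eps * INR n * 1 / (1 + eps)) * exp (INR n * (Hbin p * ln 2)) / 2 ^ n.
Proof.
move=> He Hp Hp2.
rewrite /u0 /uB Sval_E.
set E := Rpower 2 (eps * INR n * 1 / (1 + eps)).
have HE : 1 <= E.
  apply: Rpower2_ge1; have := pos_INR n => Hn.
  rewrite /Rdiv; apply: Rmult_le_pos; last (apply: Rlt_le; apply: Rinv_0_lt_compat; lra).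
  rewrite Rmult_1_r; apply: Rmult_le_pos; lra.
set V := \big[Rplus/0]_(x : 'rV['F_2]_n)
     (if Rle_dec (INR (hdist x GRing.zero)) (p * INR n) then 1 else 0).
have HV := vol_bound n Hp Hp2; rewrite -/V in HV.
have HS : Ssum p eps (span_code (GRing.zero : 'M['F_2]_(0, n))) <= 2 ^ n + E * V.
  rewrite /Ssum.
  apply: Rle_trans (_ : \big[Rplus/0]_(x : 'rV['F_2]_n)
      (1 + E * (if Rle_dec (INR (hdist x GRing.zero)) (p * INR n) then 1 else 0)) <= _).
    apply: sum_le => x; rewrite /Aval Lcount0; case: Rle_dec => H /=.
      rewrite /E; lra.
    rewrite Rmult_0_r /Rdiv Rmult_0_l Rpower_O; lra.
  rewrite big_split /= sum_const card_M mul1n -big_distrr /=. by rewrite Rmult_1_r; apply: Rle_refl.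
have HN := pow_lt 2 n ltac:(lra).
have HVe : E * V <= E * exp (INR n * (Hbin p * ln 2)) by apply: Rmult_le_compat_l; lra.
apply: Rle_trans (_ : (2 ^ n + E * V) / 2 ^ n - 1 <= _).
  apply: Rplus_le_compat_r; apply: Rmult_le_compat_r => //.
  by apply: Rlt_le; apply: Rinv_0_lt_compat.
have -> : (2 ^ n + E * V) / 2 ^ n - 1 = E * V / 2 ^ n by field; lra.
apply: Rmult_le_compat_r => //; apply: Rlt_le; apply: Rinv_0_lt_compat; lra.
Qed.

Lemma pow2kn k n : 2 ^ (k * n) = (2 ^ n) ^ k.
Proof. rewrite -pow_mult; f_equal; apply: Nat.mul_comm. Qed.

Lemma prob_le n k p eps th : 0 < eps -> 0 < th -> th <= 1 ->
  prob_bad n k p eps <= (INR k + 1) * (2 + th) ^ k * (u0 n p eps / th).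
Proof.
move=> He Hth Hth1.
rewrite /prob_bad card_M pow2kn.
have HN := pow_lt (2 ^ n) k (pow_lt 2 n ltac:(lra)).
have HB := Bad_bound n p He Hth k.
apply: (Rmult_le_reg_r ((2 ^ n) ^ k)) => //.
rewrite /Rdiv Rmult_assoc Rinv_l; last lra.
rewrite Rmult_1_r; apply: Rle_trans HB.
apply: sum_le => B.
have := G_vals p eps th B; rewrite /uB.
case: Rle_dec => H /=; first lra.
case => [->|[_ H']]; lra.
Qed.

Lemma final_num (m th g : R) : 0 < th -> 0 < g -> 1 <= m -> 32 / (th * (g * g)) < m ->
  (m + 1) / th * exp (- (g * m)) <= exp (- (g / 2 * m)).
Proof.
move=> Ht Hg Hm HN.
set y := g * m / 2.
have Hy : 0 < y by rewrite /y; nra.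
have E1 : exp y = exp (y / 2) * exp (y / 2) by rewrite -exp_plus; f_equal; field.
have E2 : 1 + y / 2 <= exp (y / 2) by apply: exp_ineq1_le.
have E3 : y / 2 * (y / 2) <= exp y by rewrite E1; nra.
have H32 : 32 < th * (g * g) * m.
  have Hp : 0 < th * (g * g) by apply: Rmult_lt_0_compat => //; apply: Rmult_lt_0_compat.
  have := Rmult_lt_compat_l _ _ _ Hp HN.
  by rewrite /Rdiv -Rmult_assoc (Rmult_comm (th * (g * g))) Rmult_assoc Rinv_r; lra.
have H1 : (m + 1) / th <= exp y.
  apply: Rle_trans E3.
  apply: (Rmult_le_reg_r th) => //; rewrite /Rdiv Rmult_assoc Rinv_l; last lra.
  have H4 : 32 * m < th * (g * g) * m * m.
    by apply: Rmult_lt_compat_r; lra.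
  have -> : y / 2 * (y / 2) * th = th * (g * g) * m * m / 16 by rewrite /y; field.
  lra.
have Ee : exp (- (g / 2 * m)) = exp y * exp (- (g * m)).
  by rewrite -exp_plus; f_equal; rewrite /y; field.
rewrite Ee; apply: Rmult_le_compat_r; last exact: H1.
exact: Rlt_le (exp_pos _).
Qed.

Lemma pow_exp_le (th : R) (k : nat) : 0 <= th ->
  (2 + th) ^ k <= exp (INR k * ln 2) * exp (INR k * (th / 2)).
Proof.
move=> Ht.
have -> : (2 + th) ^ k = 2 ^ k * (1 + th / 2) ^ k.
  by rewrite -Rpow_mult_distr; f_equal; field.
apply: Rmult_le_compat.
- by apply: pow_le; lra.
- by apply: pow_le; lra.
- by rewrite -Rpower_pow; [apply: Rle_refl | lra].
- apply: Rle_trans (_ : exp (th / 2) ^ k <= _).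
    by apply: pow_incr; split; [lra | apply: exp_ineq1_le].
  by rewrite -Rpower_pow; [rewrite /Rpower ln_exp; apply: Rle_refl | apply: exp_pos].
Qed.

Lemma lemma2_aux (eps p : R) :
  (0 < eps)%R -> (0 < p)%R -> (p < / 2)%R ->
  exists c : R, (0 < c)%R /\ exists N : nat,
    forall n k : nat, leq N n ->
      INR k = ((1 - Hbin p - eps) * INR n)%R ->
      (prob_bad n k p eps <= exp (- (c * INR n)))%R.
Proof.
move=> He Hp Hp2.
set L2 := ln 2.
have HL2a : / 2 < L2 := ln_lt_2.
have HL2' : L2 < 1.
  have := exp_ineq1 1 ltac:(lra) => H.
  rewrite /L2 -[X in _ < X](ln_exp 1); apply: ln_increasing; lra.
set be := eps * eps / (1 + eps).
have Hbe : 0 < be.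
  rewrite /be /Rdiv; apply: Rmult_lt_0_compat; first nra.
  apply: Rinv_0_lt_compat; lra.
have Hq : 0 < be / (1 + be) < 1.
  split; first by rewrite /Rdiv; apply: Rmult_lt_0_compat => //; apply: Rinv_0_lt_compat; lra.
  apply: (Rmult_lt_reg_r (1 + be)); first lra.
  rewrite /Rdiv Rmult_assoc Rinv_l; lra.
set th := L2 * (be / (1 + be)).
have Hth : 0 < th by rewrite /th; apply: Rmult_lt_0_compat; lra.
have Hth1 : th <= 1 by rewrite /th; nra.
have Hthb : th <= L2 * be.
  rewrite /th; apply: Rmult_le_compat_l; first lra.
  apply: (Rmult_le_reg_r (1 + be)); first lra.
  rewrite /Rdiv Rmult_assoc Rinv_l; nra.
set g := L2 * be / 2.
have Hg : 0 < g by rewrite /g; nra.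
exists (g / 2); split; first lra.
have [N0 HN0] := INR_unbounded (32 / (th * (g * g))).
exists N0.+1 => n k Hn Hk.
have HnN : INR N0.+1 <= INR n by apply: le_INR; apply/leP.
rewrite S_INR in HnN.
have := pos_INR N0 => HN0'.
have Hn1 : 1 <= INR n by lra.
have HnB : 32 / (th * (g * g)) < INR n by lra.
set hL := Hbin p * L2.
have HhL : 0 <= hL.
  rewrite /hL /L2 HL2.
  have H1 : ln p < 0 by rewrite -ln_1; apply: ln_increasing; lra.
  have H2 : ln (1 - p) < 0 by rewrite -ln_1; apply: ln_increasing; lra.
  nra.
have HH : 0 <= Hbin p.
  apply: (Rmult_le_reg_r L2); first lra. rewrite Rmult_0_l; exact: HhL.
have Hkn : INR k <= INR n by rewrite Hk; nra.
have Hk0 := pos_INR k.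
apply: Rle_trans (prob_le n k p He Hth Hth1) _.
have Hu0 := u0_bound n He Hp Hp2.
have Hu0' : 0 <= u0 n p eps by rewrite /u0; apply: uB_ge0.
have Hpk := pow_exp_le k (Rlt_le _ _ Hth); rewrite -/L2 in Hpk.
rewrite /Rpower -/L2 -/hL -(Rpower_pow n) in Hu0; last lra.
rewrite /Rpower -/L2 in Hu0.
set E1 := exp (INR k * L2) * exp (INR k * (th / 2)) in Hpk.
set E2 := exp (eps * INR n * 1 / (1 + eps) * L2) * exp (INR n * hL) / exp (INR n * L2) in Hu0.
have HE1 : 0 <= E1 by rewrite /E1; apply: Rmult_le_pos; apply: Rlt_le; apply: exp_pos.
have Hit : 0 < / th by apply: Rinv_0_lt_compat.
apply: Rle_trans (_ : (INR k + 1) * E1 * (E2 / th) <= _).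
  apply: Rmult_le_compat.
  - apply: Rmult_le_pos; [lra | apply: pow_le; lra].
  - rewrite /Rdiv; apply: Rmult_le_pos; lra.
  - apply: Rmult_le_compat_l; lra.
  - rewrite /Rdiv; apply: Rmult_le_compat_r; lra.
set A := INR k * L2 + INR k * (th / 2) + eps * INR n * 1 / (1 + eps) * L2
   + INR n * hL + - (INR n * L2).
have EA : E1 * E2 = exp A.
  rewrite /A /E1 /E2 !exp_plus exp_Ropp; field.
  by apply: Rgt_not_eq; apply: exp_pos.
have HA : A <= - (g * INR n).
  have EA' : A = INR k * (th / 2) - be * L2 * INR n.
    rewrite /A /be /hL /g; rewrite -[INR k * L2]/(INR k * L2) Hk; field; lra.
  rewrite EA' /g.
  have : INR k * th <= INR n * (L2 * be).
    apply: Rmult_le_compat => //; lra.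
  lra.
apply: Rle_trans (_ : (INR n + 1) / th * exp (- (g * INR n)) <= _); last first.
  exact: final_num Hth Hg Hn1 HnB.
have -> : (INR k + 1) * E1 * (E2 / th) = (INR k + 1) / th * exp A.
  by rewrite -EA; field; lra.
apply: Rmult_le_compat.
- rewrite /Rdiv; apply: Rmult_le_pos; lra.
- by apply: Rlt_le; apply: exp_pos.
- rewrite /Rdiv; apply: Rmult_le_compat_r; lra.
- exact: exp_le.
Qed.

Local Close Scope R_scope.

Theorem lemma2 (eps p : R) :
  (0 < eps)%R -> (0 < p)%R -> (p < / 2)%R ->
  exists c : R, (0 < c)%R /\ exists N : nat,
    forall n k : nat, (N <= n)%N ->
      INR k = ((1 - Hbin p - eps) * INR n)%R ->
      (prob_bad n k p eps <= exp (- (c * INR n)))%R.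
Proof. exact: lemma2_aux. Qed.
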